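(* Let $m=m_n\le n$ with $n/m=O(1)$, and let $0<q=q_n\le Q=Q_n$ satisfy $Q/q=o(n)$. Then there exists a constant $c_1>0$, not depending on $q,Q,m,n$, such that for all sufficiently large $n$ and every matrix $V\in\mathcal{L}_{m,n}(q,Q)$, \[ \|V^{-1}-S\|\le\frac{c_1Q^2}{q^3mn}, \] where $\|A\|:=\max_{i,j}|a_{i,j}|$ for a matrix $A=(a_{i,j})$.
   Context: $\mathcal{L}_{m,n}(q,Q)$ is the class of real symmetric $(m+n-1)\times(m+n-1)$ matrices $V=(v_{i,j})$ such that: $v_{i,j}=0$ for $i\ne j$ both in $\{1,\dots,m\}$ and for $i\neq j$ both in $\{m+1,\dots,m+n-1\}$; $q\le v_{i,j}=v_{j,i}\le Q$ for $i\in\{1,\dots,m\}$, $j\in\{m+1,\dots,m+n-1\}$; $q\le v_{i,i}-\sum_{j=m+1}^{m+n-1}v_{i,j}\le Q$ for $i=1,\dots,m$; and $v_{i,i}=\sum_{k=1}^m v_{k,i}$ for $i=m+1,\dots,m+n-1$. Put $v_{m+n,m+n}=\sum_{i=1}^m\big(v_{i,i}-\sum_{j=m+1}^{m+n-1}v_{i,j}\big)$. The matrix $S=(s_{i,j})$ of size $(m+n-1)\times(m+n-1)$ is: $s_{i,j}=\frac{\delta_{i,j}}{v_{i,i}}+\frac{1}{v_{m+n,m+n}}$ if $i,j\in\{1,\dots,m\}$ or $i,j\in\{m+1,\dots,m+n-1\}$, and $s_{i,j}=-\frac{1}{v_{m+n,m+n}}$ if one index lies in $\{1,\dots,m\}$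 and the other in $\{m+1,\dots,m+n-1\}$ ($\delta_{i,j}$ the Kronecker delta). *)

(* Defs.v *)
From HB Require Import structures.
From mathcomp Require Import all_boot all_order all_algebra.
From mathcomp Require Import reals.
Set Implicit Arguments. Unset Strict Implicit. Unset Printing Implicit Defensive.
Import Order.TTheory GRing.Theory Num.Theory.
Local Open Scope ring_scope.

(* Indices are 0-based: k : 'I_(m+n-1); the paper's index k+1 lies in
   {1..m} iff k < m, and in {m+1..m+n-1} iff m <= k. *)
Section Defs.
Variable R : realType.

Definition inL (m n : nat) (q Q : R) (V : 'M[R]_(m + n - 1)) : Prop :=
  [/\ V^T = V,
      (forall i j : 'I_(m + n - 1), i != j -> (i < m)%N = (j < m)%N -> V i j = 0),
      (forall i j : 'I_(m + n - 1), (i < m)%N -> (m <= j)%N ->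
           q <= V i j /\ V i j <= Q),
      (forall i : 'I_(m + n - 1), (i < m)%N ->
           q <= V i i - \sum_(j : 'I_(m + n - 1) | (m <= j)%N) V i j /\
           V i i - \sum_(j : 'I_(m + n - 1) | (m <= j)%N) V i j <= Q)
    & (forall i : 'I_(m + n - 1), (m <= i)%N ->
           V i i = \sum_(k : 'I_(m + n - 1) | (k < m)%N) V k i)].

(* v_{m+n,m+n} *)
Definition vlast (m n : nat) (V : 'M[R]_(m + n - 1)) : R :=
  \sum_(i : 'I_(m + n - 1) | (i < m)%N)
     (V i i - \sum_(j : 'I_(m + n - 1) | (m <= j)%N) V i j).

Definition Smat (m n : nat) (V : 'M[R]_(m + n - 1)) : 'M[R]_(m + n - 1) :=
  \matrix_(i, j)
    (if (i < m)%N == (j < m)%N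
     then (i == j)%:R / V i i + (vlast V)^-1
     else - (vlast V)^-1).

Definition maxnorm (k l : nat) (A : 'M[R]_(k, l)) : R :=
  \big[Num.max/0]_(i < k) \big[Num.max/0]_(j < l) `|A i j|.
End Defs.

Arguments inL {R} m n q Q V.
Arguments vlast {R} m n V.
Arguments Smat {R} m n V.
Arguments maxnorm {R k l} A.

(* Main.v *)
Require Import Defs.
From HB Require Import structures.
From mathcomp Require Import all_boot all_order all_algebra.
From mathcomp Require Import reals.
From mathcomp Require Import lra ring zify.
Import Order.TTheory GRing.Theory Num.Theory.
Local Open Scope ring_scope.

Lemma ar1 (R : realType) (Q ra rb a b t : R) : 0 <= ra -> ra <= Q -> 0 <= rb -> rb <= Q ->
  b <= t -> t <= a -> - (Q * `|t|) <= ra * a - rb * b.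
Proof.
move=> *; case: (lerP 0 t) => ht; [rewrite ger0_norm // | rewrite ltr0_norm //]; nra.
Qed.

Lemma ldiv (R : realType) (a A d D : R) : 0 <= a -> a <= A -> 0 < D -> D <= d -> a / d <= A / D.
Proof.
move=> a0 aA D0 Dd; apply: le_trans (_ : a / D <= _).
  apply: ler_wpM2l => //; rewrite lef_pV2 ?posrE //; apply: lt_le_trans D0 Dd.
by apply: ler_wpM2r => //; rewrite invr_ge0 ltW.
Qed.

Lemma ar2 {R : realType} {E A B SA SB D T T' : R} : A + SA <= E -> - E <= B + SB ->
  SA - SB = D -> - T <= A - B -> T <= T' -> D <= 2 * E + T'.
Proof. move=> *; lra. Qed.

Lemma ar3 {R : realType} {yv a b t K s' rho : R} : b <= yv -> yv <= a -> b <= t -> t <= a ->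
  a - b <= K -> `|t| <= s' -> 0 <= rho -> `|yv| <= K + s' + rho.
Proof.
move=> *; have := ler_norm t; have : - `|t| <= t by rewrite lerNl -normrN; apply: ler_norm.
move=> *; rewrite ler_norml; apply/andP; split; lra.
Qed.

Lemma ar4 {R : realType} {z e a b t K s' rho : R} : b <= z -> z <= a -> b <= t -> t <= a ->
  a - b <= K -> `|t| <= s' -> `|e| <= rho -> `|z - e| <= K + s' + rho.
Proof.
move=> *; have := ler_norm t; have : - `|t| <= t by rewrite lerNl -normrN; apply: ler_norm.
have := ler_norm e; have : - `|e| <= e by rewrite lerNl -normrN; apply: ler_norm.
move=> *; rewrite ler_norml; apply/andP; split; lra.
Qed.

Lemma mul2 {R : realType} (x : R) : 2 * x = x + x.
Proof. by rewrite mulr_natl mulr2n. Qed.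

Section Core.
Variable R : realType.
Variables (m n : nat) (q Q : R) (V : 'M[R]_(m + n - 1)).
Hypothesis hV : inL m n q Q V.
Hypothesis hm : (0 < m)%N.
Hypothesis hn : (1 < n)%N.
Hypothesis hq : 0 < q.

Local Notation N := (m + n - 1)%N.

Lemma N_pos : (0 < N)%N. Proof. move: hm hn; clear; lia. Qed.
Lemma m_lt_N : (m < N)%N. Proof. move: hm hn; clear; lia. Qed.
Lemma n1_pos : (0 < n - 1)%N. Proof. move: hm hn; clear; lia. Qed.
Lemma n_pos : (0 < n)%N. Proof. move: hm hn; clear; lia. Qed.

Lemma Vsym (i j : 'I_N) : V i j = V j i.
Proof. by case: hV => /matrixP /(_ j i); rewrite mxE. Qed.

Lemma VAA {i j : 'I_N} : i != j -> (i < m)%N -> (j < m)%N -> V i j = 0.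
Proof. by case: hV => _ h _ _ _ ij im jm; apply: h => //; rewrite im jm. Qed.

Lemma VBB {i j : 'I_N} : i != j -> (m <= i)%N -> (m <= j)%N -> V i j = 0.
Proof.
case: hV => _ h _ _ _ ij im jm; apply: h => //.
by rewrite ltnNge im ltnNge jm.
Qed.

Lemma VAB {i j : 'I_N} : (i < m)%N -> (m <= j)%N -> q <= V i j /\ V i j <= Q.
Proof. by case: hV => _ _ h _ _; apply: h. Qed.

Lemma VBA {i j : 'I_N} : (m <= i)%N -> (j < m)%N -> q <= V i j /\ V i j <= Q.
Proof. by move=> *; rewrite Vsym; apply: VAB. Qed.

Definition rr (i : 'I_N) := V i i - \sum_(j : 'I_N | (m <= j)%N) V i j.

Lemma rrb {i : 'I_N} : (i < m)%N -> q <= rr i /\ rr i <= Q.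
Proof. by case: hV => _ _ _ h _; apply: h. Qed.

Lemma VBdiag {i : 'I_N} : (m <= i)%N -> V i i = \sum_(k : 'I_N | (k < m)%N) V k i.
Proof. by case: hV => _ _ _ _ h; apply: h. Qed.

Lemma sumBE (F : 'I_N -> R) :
  \sum_(k < N | ~~ (k < m)%N) F k = \sum_(l : 'I_N | (m <= l)%N) F l.
Proof. by apply: eq_bigl => k; rewrite -leqNgt. Qed.

Lemma rowA (f : 'I_N -> R) (i : 'I_N) : (i < m)%N ->
  \sum_k V i k * f k = V i i * f i + \sum_(l : 'I_N | (m <= l)%N) V i l * f l.
Proof.
move=> im; rewrite (bigID (fun k : 'I_N => (k < m)%N)) /= sumBE.
rewrite (bigD1 i) //= big1 ?addr0 // => k /andP [km ki].
by rewrite VAA ?mul0r // eq_sym.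
Qed.

Lemma rowB (f : 'I_N -> R) (i : 'I_N) : (m <= i)%N ->
  \sum_k V i k * f k = \sum_(k : 'I_N | (k < m)%N) V k i * f k + V i i * f i.
Proof.
move=> im; rewrite (bigID (fun k : 'I_N => (k < m)%N)) /= sumBE.
have -> : \sum_(k < N | (k < m)%N) V i k * f k = \sum_(k < N | (k < m)%N) V k i * f k.
  by apply: eq_bigr => k _; rewrite Vsym.
rewrite [X in _ + X](bigD1 i) //= [X in _ + (_ + X)]big1 ?addr0 // => k /andP [km ki].
by rewrite VBB ?mul0r // eq_sym.
Qed.
Lemma cardA : \sum_(k : 'I_N | (k < m)%N) (1 : R) = m%:R.
Proof.
have mN : (m <= N)%N by lia.
rewrite -(big_ord_widen_cond _ xpredT (fun _ => 1) mN) /=.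
by rewrite sumr_const card_ord.
Qed.

Lemma cardB : \sum_(k : 'I_N | (m <= k)%N) (1 : R) = (n - 1)%:R.
Proof.
have h : \sum_(k < N) (1:R) = \sum_(k < N | (k<m)%N) (1:R) + \sum_(k < N | ~~ (k<m)%N) (1:R).
  by apply: bigID.
rewrite sumBE cardA sumr_const card_ord in h.
have mN : (m <= N)%N by lia.
have -> : (n - 1 = N - m)%N by lia.
by rewrite natrB // h addrC addKr.
Qed.

Lemma sumB_const (c : R) : \sum_(k : 'I_N | (m <= k)%N) c = c * (n - 1)%:R.
Proof. by rewrite -cardB mulr_sumr; apply: eq_bigr => *; rewrite mulr1. Qed.
Lemma sumA_const (c : R) : \sum_(k : 'I_N | (k < m)%N) c = c * m%:R.
Proof. by rewrite -cardA mulr_sumr; apply: eq_bigr => *; rewrite mulr1. Qed.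
Lemma Qpos : 0 < Q.
Proof.
have i0m : (0 < N)%N := N_pos.
have := rrb (i:=Ordinal i0m) hm => -[h1 h2]; apply: lt_le_trans hq _.
exact: le_trans h1 h2.
Qed.

Lemma VBlow (l : 'I_N) : (m <= l)%N -> m%:R * q <= V l l.
Proof.
move=> ml; rewrite VBdiag // mulrC -sumA_const.
by apply: ler_sum => k km; case: (VAB km ml).
Qed.

Lemma VAlow (k : 'I_N) : (k < m)%N -> n%:R * q <= V k k.
Proof.
move=> km; have := rrb km; rewrite /rr => -[h1 _].
have : (n - 1)%:R * q <= \sum_(j : 'I_N | (m <= j)%N) V k j.
  by rewrite mulrC -sumB_const; apply: ler_sum => l ml; case: (VAB km ml).
have e : ((n - 1).+1 = n)%N by lia.
have -> : n%:R = (n - 1)%:R + 1 :> R by rewrite natr1 e.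
lra.
Qed.

Lemma core (x g : 'I_N -> R) (E s rho : R) :
  (forall i, \sum_k V i k * x k = g i) ->
  (forall k : 'I_N, (k < m)%N ->
     `|g k - \sum_(l : 'I_N | (m <= l)%N) V k l * g l / V l l| <= E) ->
  `|\sum_(k : 'I_N | (k < m)%N) g k - \sum_(l : 'I_N | (m <= l)%N) g l| <= s ->
  (forall l : 'I_N, (m <= l)%N -> `|g l| <= rho * V l l) ->
  forall i, `|x i| <= (2 * E + Q * s / (m%:R * q)) / (q * (n-1)%:R)
                       + s / (m%:R * q) + rho.
Proof.
move=> hx hE hs hr.
pose y (i : 'I_N) := if (i < m)%N then x i else - x i.
have mq0 : 0 < m%:R * q by rewrite mulr_gt0 // ltr0n.
have VBpos (l : 'I_N) : (m <= l)%N -> 0 < V l l.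
  by move=> ml; apply: lt_le_trans mq0 (VBlow l ml).
have yA (k : 'I_N) : (k < m)%N -> y k = x k by rewrite /y => ->.
have yB' (l : 'I_N) : (m <= l)%N -> x l = - y l by rewrite /y ltnNge => ->; rewrite opprK.
pose SB (k : 'I_N) := \sum_(l : 'I_N | (m <= l)%N) V k l * y l.
have gA (k : 'I_N) : (k < m)%N -> g k = V k k * y k - SB k.
  move=> km; rewrite -hx rowA // yA // /SB -sumrN.
  by congr (_ + _); apply: eq_bigr => l ml; rewrite yB' // mulrN.
pose SA (l : 'I_N) := \sum_(k : 'I_N | (k < m)%N) V k l * y k.
have gB (l : 'I_N) : (m <= l)%N -> g l = SA l - V l l * y l.
  move=> ml; rewrite -hx rowB // yB' // mulrN /SA.
  by congr (_ - _); apply: eq_bigr => k km; rewrite yA.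
pose yb (l : 'I_N) := SA l / V l l.
have yBe (l : 'I_N) : (m <= l)%N -> y l = yb l - g l / V l l.
  move=> ml; rewrite gB // /yb; have := VBpos l ml; rewrite lt0r => /andP [h0 _].
  by field.
pose EE (k : 'I_N) := g k - \sum_(l : 'I_N | (m <= l)%N) V k l * g l / V l l.
have eqA (k : 'I_N) : (k < m)%N ->
    rr k * y k + \sum_(l : 'I_N | (m <= l)%N) V k l * (y k - yb l) = EE k.
  move=> km; rewrite /EE gA // /rr /SB.
  have -> : \sum_(l : 'I_N | (m <= l)%N) V k l * g l / V l l
          = \sum_(l : 'I_N | (m <= l)%N) V k l * yb l - \sum_(l : 'I_N | (m <= l)%N) V k l * y l.
    rewrite -sumrB; apply: eq_bigr => l ml.
    rewrite (yBe l ml) /=; have := VBpos l ml; rewrite lt0r => /andP [h0 _].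
    by field.
  have -> : \sum_(l : 'I_N | (m <= l)%N) V k l * (y k - yb l)
          = (\sum_(l : 'I_N | (m <= l)%N) V k l) * y k - \sum_(l : 'I_N | (m <= l)%N) V k l * yb l.
    by rewrite mulr_suml -sumrB; apply: eq_bigr => l _; rewrite mulrBr.
  ring.
pose Rs := \sum_(k : 'I_N | (k < m)%N) rr k.
have level : \sum_(k : 'I_N | (k < m)%N) rr k * y k
    = \sum_(k : 'I_N | (k < m)%N) g k - \sum_(l : 'I_N | (m <= l)%N) g l.
  have -> : \sum_(k : 'I_N | (k < m)%N) g k = \sum_(k : 'I_N | (k < m)%N) V k k * y k
        - \sum_(k : 'I_N | (k < m)%N) \sum_(l : 'I_N | (m <= l)%N) V k l * y l.
    by rewrite -sumrB; apply: eq_bigr => k km; rewrite gA.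
  have -> : \sum_(l : 'I_N | (m <= l)%N) g l = \sum_(l : 'I_N | (m <= l)%N) \sum_(k : 'I_N | (k < m)%N) V k l * y k
        - \sum_(l : 'I_N | (m <= l)%N) \sum_(k : 'I_N | (k < m)%N) V k l * y l.
    rewrite -sumrB; apply: eq_bigr => l ml; rewrite gB // (VBdiag ml) mulr_suml.
    by [].
  have -> : \sum_(k : 'I_N | (k < m)%N) rr k * y k = \sum_(k : 'I_N | (k < m)%N) V k k * y k
        - \sum_(k : 'I_N | (k < m)%N) \sum_(l : 'I_N | (m <= l)%N) V k l * y k.
    by rewrite -sumrB; apply: eq_bigr => k km; rewrite /rr mulrBl mulr_suml.
  rewrite (exchange_big _ _ _ (fun l : 'I_N => (m <= l)%N) (fun k : 'I_N => (k < m)%N)).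
  rewrite (exchange_big _ _ _ (fun l : 'I_N => (m <= l)%N) (fun k : 'I_N => (k < m)%N)).
  ring.
have i0m : (0 < N)%N := N_pos.
pose i0 : 'I_N := Ordinal i0m.
have Pi0 : i0 \in [pred k : 'I_N | (k < m)%N] by [].
have [al alA almax] : exists2 al : 'I_N, (al < m)%N & forall k : 'I_N, (k < m)%N -> y k <= y al.
  case: (arg_maxP y Pi0) => al alA h; exists al => // k km; exact: h.
have [be beA bemin] : exists2 be : 'I_N, (be < m)%N & forall k : 'I_N, (k < m)%N -> y be <= y k.
  case: (arg_minP y Pi0) => be beA h; exists be => // k km; exact: h.
set a := y al; set b := y be.
have ybb (l : 'I_N) : (m <= l)%N -> b <= yb l /\ yb l <= a.
  move=> ml; have Vp := VBpos l ml; rewrite /yb /SA; split.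
    rewrite ler_pdivlMr // (VBdiag ml) mulr_sumr; apply: ler_sum => k km.
    have [h _] := VAB km ml; have := bemin k km; rewrite /b => hb.
    have h0 : 0 <= V k l by exact: le_trans (ltW hq) h.
    nra.
  rewrite ler_pdivrMr // (VBdiag ml) mulr_sumr; apply: ler_sum => k km.
  have [h _] := VAB km ml; have := almax k km; rewrite /a => hb.
  have h0 : 0 <= V k l by exact: le_trans (ltW hq) h.
  nra.
set n1 := (n - 1)%:R.
have Ea : rr al * a + q * \sum_(l : 'I_N | (m <= l)%N) (a - yb l) <= E.
  have h1 := eqA al alA; have h2 := hE al alA.
  have h3 : q * \sum_(l : 'I_N | (m <= l)%N) (a - yb l) <= \sum_(l : 'I_N | (m <= l)%N) V al l * (a - yb l).
    rewrite mulr_sumr; apply: ler_sum => l ml; have [h _] := VAB alA ml.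
    have [_ h'] := ybb l ml; move: h h'; rewrite /a.
    generalize (V al l) (yb l) (y al) => v z w hv hz; nra.
  have h4 : EE al <= E by apply: le_trans (ler_norm _) h2.
  rewrite /a; lra.
have Eb : - E <= rr be * b + q * \sum_(l : 'I_N | (m <= l)%N) (b - yb l).
  have h1 := eqA be beA; have h2 := hE be beA.
  have h3 : \sum_(l : 'I_N | (m <= l)%N) V be l * (b - yb l) <= q * \sum_(l : 'I_N | (m <= l)%N) (b - yb l).
    rewrite mulr_sumr; apply: ler_sum => l ml; have [h _] := VAB beA ml.
    have [h' _] := ybb l ml; move: h h'; rewrite /b.
    generalize (V be l) (yb l) (y be) => v z w hv hz; nra.
  have h4 : - E <= EE be by rewrite lerNl; apply: le_trans _ h2; rewrite -normrN; exact: ler_norm.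
  rewrite /b in h3 *; lra.
have sd : \sum_(l : 'I_N | (m <= l)%N) (a - yb l) - \sum_(l : 'I_N | (m <= l)%N) (b - yb l) = (a - b) * n1.
  rewrite -sumrB -sumB_const; apply: eq_bigr => l _; lra.
have Rslow : m%:R * q <= Rs.
  rewrite mulrC -sumA_const; apply: ler_sum => k km; by case: (rrb km).
have Rs0 : 0 < Rs by apply: lt_le_trans mq0 Rslow.
set sig := \sum_(k : 'I_N | (k < m)%N) g k - \sum_(l : 'I_N | (m <= l)%N) g l.
set t := sig / Rs.
have tb : b <= t /\ t <= a.
  rewrite /t /sig -level; split; [rewrite ler_pdivlMr // | rewrite ler_pdivrMr //];
    rewrite /Rs mulr_sumr; apply: ler_sum => k km; have [h1 _] := rrb km.
    have u0 : 0 <= rr k by apply: le_trans (ltW hq) h1.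
    by rewrite mulrC; apply: ler_wpM2l => //; apply: bemin.
  have u0 : 0 <= rr k by apply: le_trans (ltW hq) h1.
  by rewrite [X in _ <= X]mulrC; apply: ler_wpM2l => //; apply: almax.
have key : - (Q * `|t|) <= rr al * a - rr be * b.
  have [h1 h2] := rrb alA; have [h3 h4] := rrb beA; case: tb => h5 h6.
  by apply: ar1 => //; apply: le_trans (ltW hq) _.
have s0 : 0 <= s by apply: le_trans (normr_ge0 _) hs.
have tn : `|t| <= s / (m%:R * q).
  rewrite /t normrM normfV (gtr0_norm Rs0).
  apply: le_trans (_ : s / Rs <= _).
    by apply: ler_wpM2r; [rewrite invr_ge0 ltW | ].
  apply: ler_wpM2l => //; rewrite lef_pV2 ?posrE //.
have n10 : 0 < n1 by rewrite /n1 ltr0n n1_pos.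
have qn1 : 0 < q * n1 by rewrite mulr_gt0.
have Q0 := Qpos.
have hQt : Q * `|t| <= Q * (s / (m%:R * q)) by apply: ler_wpM2l => //; apply: ltW.
have hsd : q * \sum_(l : 'I_N | (m <= l)%N) (a - yb l) - q * \sum_(l : 'I_N | (m <= l)%N) (b - yb l)
    = (a - b) * (q * n1) by rewrite -mulrBr sd; ring.
set K := (2 * E + Q * s / (m%:R * q)) / (q * n1).
have Dle : a - b <= K.
  rewrite /K ler_pdivlMr // -hsd -(mulrA Q).
  exact: (ar2 Ea Eb erefl key hQt).
have mB : (m < N)%N := m_lt_N.
have rho0 : 0 <= rho.
  have ml : (m <= Ordinal mB)%N by [].
  have := hr _ ml; have := VBpos _ ml.
  move=> h1 h2; have := le_trans (normr_ge0 _) h2; rewrite pmulr_lge0 //.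
move=> i.
have -> : `|x i| = `|y i| by rewrite /y; case: (i < m)%N => //; rewrite normrN.
case: (ltnP i m) => im.
  have h1 := almax i im; have h2 := bemin i im; case: tb => h3 h4.
  exact: ar3 h2 h1 h3 h4 Dle tn rho0.
have [h1 h2] := ybb i im; case: tb => h3 h4.
have hg : `|g i / V i i| <= rho.
  rewrite normrM normfV (gtr0_norm (VBpos i im)) ler_pdivrMr ?VBpos //; exact: hr.
rewrite (yBe i im); exact: ar4 h1 h2 h3 h4 Dle tn hg.
Qed.

Definition eps (i : 'I_N) : R := if (i < m)%N then 1 else -1.
Definition rho_ (i : 'I_N) : R := if (i < m)%N then rr i else 0.

Lemma vlastE : vlast m n V = \sum_(k : 'I_N | (k < m)%N) rr k.
Proof. by []. Qed.

Lemma vlast_low : m%:R * q <= vlast m n V.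
Proof. rewrite vlastE mulrC -sumA_const; apply: ler_sum => k km; by case: (rrb km). Qed.

Lemma vlast_pos : 0 < vlast m n V.
Proof. apply: lt_le_trans vlast_low; by rewrite mulr_gt0 // ltr0n. Qed.

Lemma Smat_eq (i j : 'I_N) :
  Smat m n V i j = (i == j)%:R / V i i + eps i * eps j / vlast m n V.
Proof.
rewrite /Smat mxE /eps; case: (ltnP i m) => im; case: (ltnP j m) => jm /=.
  by rewrite !mul1r.
  have -> : (i == j) = false by apply/negbTE; apply/eqP => e; move: im; rewrite e ltnNge jm.
  by rewrite mul0r add0r mul1r mulN1r.
  have -> : (i == j) = false by apply/negbTE; apply/eqP => e; move: jm; rewrite -e ltnNge im.
  by rewrite mul0r add0r !mulN1r.
by rewrite mulN1r opprK mul1r.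
Qed.

Lemma Veps (i : 'I_N) : \sum_k V i k * eps k = rho_ i.
Proof.
rewrite /rho_; case: (ltnP i m) => im.
  rewrite rowA // /eps im mulr1 /rr; congr (_ + _); rewrite -sumrN.
  by apply: eq_bigr => l ml; rewrite ltnNge ml /= mulrN1.
rewrite rowB // /eps ltnNge im /= mulrN1 (VBdiag im).
rewrite (eq_bigr (fun k => V k i)); first by rewrite subrr.
by move=> k ->; rewrite mulr1.
Qed.

Lemma VS (i j : 'I_N) : (V *m Smat m n V) i j
   = V i j / V j j + eps j / vlast m n V * rho_ i.
Proof.
rewrite mxE.
rewrite (eq_bigr (fun k => V i k * ((k == j)%:R / V k k) + V i k * eps k * (eps j / vlast m n V))); last first.
  by move=> k _; rewrite Smat_eq mulrDr !mulrA.
rewrite big_split /= -mulr_suml Veps mulrC; congr (_ + _).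
rewrite (bigD1 j) //= big1 ?addr0; first by rewrite eqxx mul1r.
by move=> k /negbTE ->; rewrite mul0r mulr0.
Qed.

Lemma Vunit : V \in unitmx.
Proof.
rewrite unitmxE unitfE; apply/negP => /det0P [v vn0 vV].
apply/negP: vn0; rewrite negbK; apply/eqP/rowP => i; rewrite mxE.
apply/eqP; rewrite -normr_le0.
apply: le_trans (@core (fun k => v 0 k) (fun _ => 0) 0 0 0 _ _ _ _ i) _.
- move=> i' /=; move/matrixP: vV => /(_ 0 i'); rewrite !mxE => h; rewrite -[RHS]h.
  by apply: eq_bigr => k _; rewrite Vsym mulrC.
- by move=> k _; rewrite big1 ?subr0 ?normr0 // => l _; rewrite mulr0 mul0r.
- by rewrite !big1 // subr0 normr0.
- by move=> l _; rewrite normr0 mul0r.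
- by rewrite !(mulr0, mul0r, add0r, addr0).
Qed.


Lemma gform (i j : 'I_N) : (1%:M - V *m Smat m n V) i j
  = (i == j)%:R - V i j / V j j - eps j / vlast m n V * rho_ i.
Proof. have := VS i j; rewrite mxE => h; rewrite !mxE h opprD addrA. by []. Qed.

Lemma VApos {k : 'I_N} : (k < m)%N -> 0 < V k k.
Proof. move=> km; apply: lt_le_trans (VAlow k km); by rewrite mulr_gt0 // ltr0n n_pos. Qed.

Lemma VBposL {l : 'I_N} : (m <= l)%N -> 0 < V l l.
Proof. move=> ml; apply: lt_le_trans (VBlow l ml); by rewrite mulr_gt0 // ltr0n. Qed.

Lemma Fbound (X : R) (i j : 'I_N) :
  Q / (m%:R * q) <= X * (q * n%:R) ->
  Q * (Q / (n%:R * q)) / (m%:R * q) * (n - 1)%:R <= X * (q * n%:R) ->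
  Q / (n%:R * q) <= X * (m%:R * q) ->
  `|(invmx V - Smat m n V) i j| <=
     (2 * (2 * (X * (q * n%:R))) + Q * (Q / (n%:R * q)) / (m%:R * q)) / (q * (n - 1)%:R)
      + Q / (n%:R * q) / (m%:R * q) + X.
Proof.
move=> L1 L2 L3.
have mq0 : 0 < m%:R * q by rewrite mulr_gt0 // ltr0n.
have nq0 : 0 < n%:R * q by rewrite mulr_gt0 // ltr0n n_pos.
have Q0 := Qpos.
have X0 : 0 <= X.
  have h : 0 <= Q / (m%:R * q) by rewrite divr_ge0 // ltW.
  have := le_trans h L1; by rewrite pmulr_lge0 // mulr_gt0 // ltr0n n_pos.
have vL0 := vlast_pos.
have hVF : V *m (invmx V - Smat m n V) = 1%:M - V *m Smat m n V.
  by rewrite mulmxBr mulmxV ?Vunit.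
move: i; apply: (@core (fun k => (invmx V - Smat m n V) k j) (fun k => (1%:M - V *m Smat m n V) k j) (2 * (X * (q * n%:R))) (Q / (n%:R * q)) X).
- by move=> i'; rewrite -hVF mxE.
- move=> k km /=; rewrite gform.
  have rk := rrb km; have rkq : rr k / vlast m n V <= Q / (m%:R * q).
    by case: rk => h1 h2; apply: ldiv => //; [apply: le_trans (ltW hq) h1 | apply: vlast_low].
  have rk0 : 0 <= rr k / vlast m n V.
    by case: rk => h1 _; apply: divr_ge0; [apply: le_trans (ltW hq) h1 | apply: ltW; apply: vlast_pos].
  case: (ltnP j m) => jm.
  + have Vj0 := VApos jm.
    have e1 : (k == j)%:R - V k j / V j j = 0.
      case: (eqVneq k j) => [-> | kj]; first by rewrite divff ?subrr // gt_eqF.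
      by rewrite (VAA kj km jm) mul0r subrr.
    have e2 : \sum_(l : 'I_N | (m <= l)%N) V k l * (1%:M - V *m Smat m n V) l j / V l l
       = - \sum_(l : 'I_N | (m <= l)%N) V k l * (V l j / V j j) / V l l.
      rewrite -sumrN; apply: eq_bigr => l ml; rewrite gform /rho_ ltnNge ml /=.
      have -> : (l == j) = false by apply/negbTE; apply/eqP => e; move: jm; rewrite -e ltnNge ml.
      by rewrite mulr0 subr0 sub0r mulrN mulNr.
    rewrite e1 e2 /eps jm /rho_ km sub0r opprK mul1r.
    set S := \sum_(l : 'I_N | (m <= l)%N) _.
    have S0 : 0 <= S.
      apply: sumr_ge0 => l ml; have [h1 _] := VAB km ml; have [h3 _] := VBA ml jm.
      have Vl := VBposL ml.
      have a0 : 0 <= V k l := le_trans (ltW hq) h1; have b0 : 0 <= V l j := le_trans (ltW hq) h3.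
      exact: divr_ge0 (mulr_ge0 a0 (divr_ge0 b0 (ltW Vj0))) (ltW Vl).
    have SS : S <= X * (q * n%:R).
      apply: le_trans L2; rewrite /S -sumB_const; apply: ler_sum => l ml.
      have [h1 h2] := VAB km ml; have [h3 h4] := VBA ml jm.
      apply: ldiv; [| | exact: mq0 | exact: VBlow].
        by rewrite mulr_ge0 ?divr_ge0 // ltW // (lt_le_trans hq).
      apply: ler_pM => //; first by apply: le_trans (ltW hq) h1.
        by rewrite divr_ge0 // ltW // (lt_le_trans hq).
      by apply: ldiv => //; [apply: le_trans (ltW hq) h3 | exact: VAlow].
    rewrite mulrC; apply: le_trans (ler_normD _ _) _; rewrite normrN (ger0_norm rk0) (ger0_norm S0).
    by rewrite mul2; exact: lerD (le_trans rkq L1) SS.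
  + have Vj0 := VBposL jm.
    have e2 : \sum_(l : 'I_N | (m <= l)%N) V k l * (1%:M - V *m Smat m n V) l j / V l l = 0.
      apply: big1 => l ml; rewrite gform /rho_ ltnNge ml /= mulr0 subr0.
      case: (eqVneq l j) => [-> | lj]; first by rewrite divff ?subrr ?mulr0 ?mul0r // gt_eqF.
      by rewrite (VBB lj ml jm) mul0r subrr mulr0 mul0r.
    have -> : (k == j) = false by apply/negbTE; apply/eqP => e; move: km; rewrite e ltnNge jm.
    rewrite e2 subr0 /eps ltnNge jm /= /rho_ km.
    rewrite sub0r mulNr mul1r mulNr opprK (mulrC (vlast m n V)^-1).
    have [h1 h2] := VAB km jm.
    have hv : V k j / V j j <= Q / (m%:R * q).
      by apply: ldiv => //; [apply: le_trans (ltW hq) h1 | exact: VBlow].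
    have hv0 : 0 <= V k j / V j j by rewrite divr_ge0 // ltW // (lt_le_trans hq).
    apply: le_trans (ler_normD _ _) _; rewrite normrN (ger0_norm rk0) (ger0_norm hv0).
    apply: le_trans (lerD hv rkq) _.
    by rewrite mul2; exact: (lerD L1 L1).
- set g := fun k => (1%:M - V *m Smat m n V) k j.
  have e1 : \sum_(k : 'I_N | (k < m)%N) g k - \sum_(l : 'I_N | (m <= l)%N) g l
          = \sum_k eps k * g k.
    rewrite [RHS](bigID (fun k : 'I_N => (k < m)%N)) /= sumBE.
    have -> : \sum_(i0 < N | (i0 < m)%N) eps i0 * g i0 = \sum_(k : 'I_N | (k < m)%N) g k.
      by apply: eq_bigr => k km; rewrite /eps km mul1r.
    have -> : \sum_(l : 'I_N | (m <= l)%N) eps l * g l = - \sum_(l : 'I_N | (m <= l)%N) g l.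
      by rewrite -sumrN; apply: eq_bigr => l ml; rewrite /eps ltnNge ml /= mulN1r.
    by [].
  have e2 : \sum_k eps k * g k = \sum_k (eps k * (k == j)%:R) - (\sum_k V j k * eps k) / V j j
      - eps j / vlast m n V * \sum_k eps k * rho_ k.
    rewrite mulr_suml mulr_sumr -!sumrB; apply: eq_bigr => k _; rewrite /g gform (Vsym j k).
    ring.
  have e3 : \sum_k (eps k * (k == j)%:R) = eps j.
    rewrite (bigD1 j) //= eqxx mulr1 big1 ?addr0 // => k /negbTE ->; by rewrite mulr0.
  have e4 : \sum_k eps k * rho_ k = vlast m n V.
    rewrite (bigID (fun k : 'I_N => (k < m)%N)) /= sumBE [X in _ + X]big1 ?addr0.
      by rewrite vlastE; apply: eq_bigr => k km; rewrite /eps /rho_ km mul1r.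
    by move=> l ml; rewrite /rho_ ltnNge ml /= mulr0.
  rewrite e1 e2 e3 e4 Veps divfK ?gt_eqF // addrC addrA addNr add0r normrN.
  rewrite /rho_; case: (ltnP j m) => jm.
    have [h1 h2] := rrb jm; rewrite ger0_norm; last by rewrite divr_ge0 ?ltW ?VApos // (lt_le_trans hq).
    by apply: ldiv => //; [apply: le_trans (ltW hq) h1 | exact: VAlow].
  by rewrite mul0r normr0 divr_ge0 // ltW.
- move=> l ml /=; rewrite gform /rho_ ltnNge ml /= mulr0 subr0.
  case: (ltnP j m) => jm.
    have -> : (l == j) = false by apply/negbTE; apply/eqP => e; move: jm; rewrite -e ltnNge ml.
    rewrite sub0r normrN; have [h1 h2] := VBA ml jm.
    rewrite ger0_norm; last by rewrite divr_ge0 // ltW ?VApos // (lt_le_trans hq).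
    apply: le_trans (_ : Q / (n%:R * q) <= _).
      by apply: ldiv => //; [apply: le_trans (ltW hq) h1 | exact: VAlow].
    apply: le_trans L3 _; apply: ler_wpM2l => //; exact: VBlow.
  have Vj0 := VBposL jm.
  case: (eqVneq l j) => [e | lj].
    have -> : (true%:R : R) = 1 by [].
    by rewrite e divff ?gt_eqF // subrr normr0 mulr_ge0 // ltW.
  have -> : (false%:R : R) = 0 by [].
  by rewrite (VBB lj ml jm) mul0r subrr normr0; apply: mulr_ge0 => //; apply: ltW; apply: VBposL.
Qed.

End Core.

Lemma final_arith {R : realType} (q Q mR nR : R) : 0 < q -> q <= Q -> 1 <= mR -> 2 <= nR ->
  [/\ Q / (mR * q) <= Q ^+ 2 / (q ^+ 3 * mR * nR) * (q * nR),
      Q * (Q / (nR * q)) / (mR * q) * (nR - 1) <= Q ^+ 2 / (q ^+ 3 * mR * nR) * (q * nR),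
      Q / (nR * q) <= Q ^+ 2 / (q ^+ 3 * mR * nR) * (mR * q) &
      (2 * (2 * (Q ^+ 2 / (q ^+ 3 * mR * nR) * (q * nR))) + Q * (Q / (nR * q)) / (mR * q))
         / (q * (nR - 1)) + Q / (nR * q) / (mR * q) + Q ^+ 2 / (q ^+ 3 * mR * nR)
        <= 12 * Q ^+ 2 / (q ^+ 3 * mR * nR)].
Proof.
move=> q0 qQ m1 n2.
have Q0 : 0 < Q by apply: lt_le_trans q0 qQ.
have m0 : 0 < mR by apply: lt_le_trans m1; rewrite ltr01.
have n0 : 0 < nR by apply: lt_le_trans n2; rewrite ltr0n.
have n10 : 0 < nR - 1 by rewrite subr_gt0; apply: lt_le_trans n2; rewrite ltr1n.
have d0 : 0 < q ^+ 3 * mR * nR by rewrite !mulr_gt0 // exprn_gt0.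
set w := (q ^+ 3 * mR * nR)^-1.
have w0 : 0 < w by rewrite invr_gt0.
have qn : q != 0 by rewrite gt_eqF.
have mn : mR != 0 by rewrite gt_eqF.
have nn : nR != 0 by rewrite gt_eqF.
have n1n : nR - 1 != 0 by rewrite gt_eqF.
split.
- have -> : Q / (mR * q) = (Q * q * q * nR) * w by rewrite /w; field; rewrite ?nn ?mn ?qn ?n1n.
  have -> : Q ^+ 2 * w * (q * nR) = (Q * Q * q * nR) * w by ring.
  apply: ler_wpM2r; first exact: ltW.
  have p : 0 <= Q * q * nR by rewrite !mulr_ge0 // ltW.
  have := ler_wpM2l p qQ.
  have -> : Q * q * q * nR = Q * q * nR * q by ring.
  by have -> : Q * Q * q * nR = Q * q * nR * Q by ring.
- have -> : Q * (Q / (nR * q)) / (mR * q) * (nR - 1) = (Q * Q * q * (nR - 1)) * w by rewrite /w; field; rewrite ?nn ?mn ?qn ?n1n.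
  have -> : Q ^+ 2 * w * (q * nR) = (Q * Q * q * nR) * w by ring.
  apply: ler_wpM2r; first exact: ltW.
  have p : 0 <= Q * Q * q by rewrite !mulr_ge0 // ltW.
  have : nR - 1 <= nR by lra.
  by move/(ler_wpM2l p).
- have -> : Q / (nR * q) = (Q * q * q * mR) * w by rewrite /w; field; rewrite ?nn ?mn ?qn ?n1n.
  have -> : Q ^+ 2 * w * (mR * q) = (Q * Q * q * mR) * w by ring.
  apply: ler_wpM2r; first exact: ltW.
  have p : 0 <= Q * q * mR by rewrite !mulr_ge0 // ltW.
  have := ler_wpM2l p qQ.
  have -> : Q * q * q * mR = Q * q * mR * q by ring.
  by have -> : Q * Q * q * mR = Q * q * mR * Q by ring.
- have -> : (2 * (2 * (Q ^+ 2 * w * (q * nR))) + Q * (Q / (nR * q)) / (mR * q)) / (q * (nR - 1))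
      = (Q * Q * ((4 * nR + 1) / (nR - 1))) * w by rewrite /w; field; rewrite ?nn ?mn ?qn ?n1n.
  have -> : Q / (nR * q) / (mR * q) = (Q * q) * w by rewrite /w; field; rewrite ?nn ?mn ?qn ?n1n.
  have -> : 12 * Q ^+ 2 * w = (12 * Q * Q) * w by ring.
  rewrite -!mulrDl; apply: ler_wpM2r; first exact: ltW.
  have h : (4 * nR + 1) / (nR - 1) <= 9 by rewrite ler_pdivrMr //; lra.
  have p : 0 <= Q * Q by rewrite mulr_ge0 // ltW.
  have a1 := ler_wpM2l p h.
  have a2 := ler_wpM2l (ltW Q0) qQ.
  rewrite expr2; lra.
Qed.

Theorem lemma1 (R : realType) (m : nat -> nat) (q Q : nat -> R) :
  (forall n, (m n <= n)%N) ->
  (* n / m_n = O(1) *)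
  (exists (C : R) (N : nat), forall n, (N <= n)%N -> n%:R <= C * (m n)%:R) ->
  (forall n, 0 < q n /\ q n <= Q n) ->
  (* Q_n / q_n = o(n) *)
  (forall eps : R, 0 < eps ->
     exists N : nat, forall n, (N <= n)%N -> Q n / q n <= eps * n%:R) ->
  exists c1 : R, 0 < c1 /\
    exists N : nat, forall n, (N <= n)%N ->
      forall V : 'M[R]_(m n + n - 1), inL (m n) n (q n) (Q n) V ->
        maxnorm (invmx V - Smat (m n) n V) <=
          c1 * Q n ^+ 2 / (q n ^+ 3 * (m n)%:R * n%:R).
Proof.
move=> hmn [C [N0 hC]] hqQ _.
exists 12; split; first by rewrite ltr0n.
exists (maxn N0 2) => nn; rewrite geq_max => /andP [hN0 hn2] V hV.
have hn : (1 < nn)%N by [].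
have hm : (0 < m nn)%N.
  have := hC nn hN0; case E: (m nn) => [|k] //.
  rewrite mulr0 => h; have : (nn <= 0)%N by rewrite -(ler_nat R).
  by rewrite leqn0 => /eqP e; move: hn; rewrite e.
have [hq hqQ'] := hqQ nn.
have m1 : 1 <= (m nn)%:R :> R by rewrite ler1n.
have n2 : 2 <= nn%:R :> R by rewrite ler_nat.
have [A1 A2 A3 A4] := final_arith (q nn) (Q nn) ((m nn)%:R) (nn%:R) hq hqQ' m1 n2.
have e : (nn - 1)%:R = nn%:R - 1 :> R by rewrite natrB // ltnW.
have X0 : 0 <= 12 * Q nn ^+ 2 / (q nn ^+ 3 * (m nn)%:R * nn%:R).
  have Q0 : 0 <= Q nn by apply: le_trans (ltW hq) hqQ'.
  apply: divr_ge0.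
    apply: mulr_ge0; [by rewrite ler0n | exact: exprn_ge0].
  apply: mulr_ge0; [apply: mulr_ge0; [exact: exprn_ge0 (ltW hq) | by rewrite ler0n] | by rewrite ler0n].
rewrite /maxnorm; apply: bigmax_le => // i _; apply: bigmax_le => // j _.
have := @Fbound _ _ _ _ _ V hV hm hn hq _ i j A1 _ A3; rewrite e => /(_ A2) h.
exact: le_trans h A4.
Qed.
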